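(* Let $\Sigma'$ be a set of FDs over $R$ (each with a single right-hand-side attribute), $I'$ an instance, $C\subseteq I'$ a set of tuples, $t$ a tuple over $R$, and $F\subseteq R$ a nonempty set of attributes. Run the procedure Find_Assignment$(t,F,I',\Sigma',C)$ described in the context. Then the procedure terminates and: (Soundness) if it returns a tuple $t_c$, then $t_c[B]=t[B]$ for every $B\in F$, and for every $t'\in I'\setminus C$ and every FD $X\rightarrow A\in\Sigma'$ it is not the case that $t_c[X]=t'[X]$ and $t_c[A]\neq t'[A]$; (Completeness) if there exists a tuple $t_g$ (cells holding constants or variables) with $t_g[B]=t[B]$ for all $B\in F$ such that for every $t'\in I'\setminus C$ the pair $(t_g,t')$ violates no FD of $\Sigma'$, then the procedure does not return $\phi$.
   Context: Instances are V-instances: each cell $t[A]$ holds a constant of $Dom(A)$ or a variable $v^A_i$; two cells are equal iff they hold the same constant or the same variable. For a set of attributes $X$, $t[X]=t'[X]$ means equality on every attribute of $X$. A pair of tuples $(t_1,t_2)$ violates $X\rightarrow A$ iff $t_1[X]=t_2[X]$ and $t_1[A]\neq t_2[A]$. Procedure Find_Assignment$(t,F,I',\Sigma',C)$: (1) Set $Fixed:=F$ and build a tuple $t_c$ with $t_c[B]=t[B]$ for $B\in Fixed$ and $t_c[B]$ equal to a new variable (not occurring anywhere else) for $B\notin Fixed$. (2) While there exist $t'\in I'\setminus C$ and an FD $X\rightarrow A\in\Sigma'$ with $t_c[X]=t'[X]$ and $t_c[A]\neq t'[A]$: if $A\in Fixed$, return $\phi$ (no assignment); otherwise set $t_c[A]:=t'[A]$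 and add $A$ to $Fixed$. (3) When no such $t'$ and FD exist, return $t_c$. *)

(* Defs.v *)
From HB Require Import structures.
From mathcomp Require Import all_boot.
From Stdlib Require List.
Set Implicit Arguments.
Unset Strict Implicit.
Unset Printing Implicit Defensive.

Section VInstances.
Variables (Attr : finType) (K : Type).

(* A cell of a V-instance: a constant, or a variable v^A_i (the attribute A
   is the column in which the cell sits, so only the index i is stored). *)
Inductive cell : Type := Cst of K | Var of nat.

Definition vtuple := Attr -> cell.

Record fd := FD { fd_lhs : {set Attr}; fd_rhs : Attr }.

Definition agree (X : {set Attr}) (t t' : vtuple) : Prop :=
  forall B, B \in X -> t B = t' B.

Definition viol (t t' : vtuple) (f : fd) : Prop :=
  agree (fd_lhs f) t t' /\ t (fd_rhs f) <> t' (fd_rhs f).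

Definition in_diff (I' : seq vtuple) (C : vtuple -> Prop) (t' : vtuple) : Prop :=
  List.In t' I' /\ ~ C t'.

Definition upd (tc : vtuple) (A : Attr) (c : cell) : vtuple :=
  fun B => if B == A then c else tc B.

(* States of the while loop: (Fixed, t_c). *)
Definition fa_state := ({set Attr} * vtuple)%type.

Definition fa_step (I' : seq vtuple) (Sigma' : seq fd) (C : vtuple -> Prop)
  (s s' : fa_state) : Prop :=
  exists t' f, in_diff I' C t' /\ List.In f Sigma' /\ viol s.2 t' f /\
    fd_rhs f \notin s.1 /\
    s' = (fd_rhs f |: s.1, upd s.2 (fd_rhs f) (t' (fd_rhs f))).

(* Big-step semantics of the loop (with arbitrary choice of the witness
   t', X -> A at each iteration): None stands for phi, Some tc for a
   returned tuple. *)
Inductive fa_run (I' : seq vtuple) (Sigma' : seq fd) (C : vtuple -> Prop) :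
  fa_state -> option vtuple -> Prop :=
| fa_fail (Fixed : {set Attr}) (tc : vtuple) t' f :
    in_diff I' C t' -> List.In f Sigma' -> viol tc t' f ->
    fd_rhs f \in Fixed -> fa_run I' Sigma' C ((Fixed, tc) : fa_state) None
| fa_cont s s' r :
    fa_step I' Sigma' C s s' -> fa_run I' Sigma' C s' r -> fa_run I' Sigma' C s r
| fa_done (Fixed : {set Attr}) (tc : vtuple) :
    (forall t' f, in_diff I' C t' -> List.In f Sigma' -> ~ viol tc t' f) ->
    fa_run I' Sigma' C ((Fixed, tc) : fa_state) (Some tc).

Definition fa_init (I' : seq vtuple) (t : vtuple) (F : {set Attr}) (tc0 : vtuple) : Prop :=
  (forall B, B \in F -> tc0 B = t B) /\
  (forall B, B \notin F -> exists n, tc0 B = Var n /\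
      (forall t'' B', List.In t'' I' -> t'' B' <> Var n) /\
      (forall B', t B' <> Var n) /\
      (forall B', B' != B -> tc0 B' <> Var n)).

Definition find_assignment (t : vtuple) (F : {set Attr}) (I' : seq vtuple)
  (Sigma' : seq fd) (C : vtuple -> Prop) (tc0 : vtuple) (r : option vtuple) : Prop :=
  fa_run I' Sigma' C ((F, tc0) : fa_state) r.

End VInstances.
Arguments Cst {K}. Arguments Var {K}.

(* Main.v *)
Require Import Defs.
From HB Require Import structures.
From mathcomp Require Import all_boot.
From Stdlib Require List.
From Stdlib Require Import Classical.

Section Pf.
Variables (Attr : finType) (K : Type).
Variables (Sigma' : seq (fd Attr)) (I' : seq (vtuple Attr K)) (C : vtuple Attr K -> Prop)
  (t : vtuple Attr K) (F : {set Attr}) (tc0 : vtuple Attr K).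

Definition Inv (s : fa_state Attr K) : Prop :=
  F \subset s.1 /\ (forall B, B \in F -> s.2 B = t B) /\
  (forall B, B \notin s.1 -> s.2 B = tc0 B).

Lemma step_inv s s' : fa_step I' Sigma' C s s' -> Inv s -> Inv s'.
Proof.
move=> [t' [f [_ [_ [_ [HA ->]]]]]] [H1 [H2 H3]]; split; [|split] => /=.
- by apply: subset_trans H1 _; apply: subsetUr.
- move=> B HB; rewrite /upd; case: eqP => [E|_]; last exact: H2.
  by exfalso; move: HA; rewrite -E (subsetP H1 _ HB).
- move=> B; rewrite in_setU1 negb_or => /andP [/negbTE HB HB2].
  by rewrite /upd HB; apply: H3.
Qed.

Lemma agree_fixed s t' X : fa_init I' t F tc0 -> Inv s -> in_diff I' C t' ->
  agree X s.2 t' -> X \subset s.1.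
Proof.
move=> [_ Hi] [H1 [_ H3]] [Hin _] Hag; apply/subsetP => B HB.
case: (boolP (B \in s.1)) => // HnB; exfalso.
have HnF : B \notin F by apply: contra HnB; apply: (subsetP H1).
have [n [En [Hn _]]] := Hi B HnF.
by apply: (Hn t' B Hin); rewrite -(Hag B HB) H3.
Qed.

Lemma acc_all : forall n (s : fa_state Attr K), #|~: s.1| <= n ->
  Acc (fun s' s => fa_step I' Sigma' C s s') s.
Proof.
elim=> [|n IH] s Hs; constructor => s' [t' [f [_ [_ [_ [HA Es']]]]]].
- exfalso; move: Hs; rewrite leqn0 cards_eq0 => /eqP E.
  by have := in_setC (fd_rhs f) s.1; rewrite E in_set0 HA.
- apply: IH; rewrite Es' /= setCU.
  have : #|~: [set fd_rhs f] :&: ~: s.1| < #|~: s.1|.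
    apply: proper_card; rewrite properE subsetIr /=; apply/subsetPn.
    exists (fd_rhs f); first by rewrite in_setC.
    by rewrite in_setI in_setC set11.
  by move=> H; rewrite -ltnS; apply: leq_trans H Hs.
Qed.

Lemma exists_run s : Acc (fun s' s => fa_step I' Sigma' C s s') s ->
  exists r, fa_run I' Sigma' C s r.
Proof.
elim=> {}s _ IH.
case: (classic (exists t' f, in_diff I' C t' /\ List.In f Sigma' /\ viol s.2 t' f)).
- move=> [t' [f [H1 [H2 H3]]]].
  case: (boolP (fd_rhs f \in s.1)) => HA.
  + exists None; case: s {IH} H3 HA => Fx tc /= H3 HA.
    exact: (fa_fail H1 H2 H3 HA).
  + have Hst : fa_step I' Sigma' C s (fd_rhs f |: s.1, upd s.2 (fd_rhs f) (t' (fd_rhs f))).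
      by exists t', f.
    have [r Hr] := IH _ Hst; exists r; exact: (fa_cont Hst Hr).
- move=> Hn; exists (Some s.2); case: s {IH} Hn => Fx tc /= Hn.
  apply: fa_done => t' f H1 H2 H3; apply: Hn; by exists t', f.
Qed.

Lemma sound s r : fa_run I' Sigma' C s r -> Inv s -> forall tc, r = Some tc ->
  (forall B, B \in F -> tc B = t B) /\
  (forall t' f, in_diff I' C t' -> List.In f Sigma' -> ~ viol tc t' f).
Proof.
elim=> {s r}.
- by [].
- move=> s s' r Hst _ IH Hi; apply: IH; exact: step_inv Hst Hi.
- move=> Fx tc H [_ [H2 _]] tc' [<-]; split => //.
Qed.

Lemma complete tg s r : fa_init I' t F tc0 -> fa_run I' Sigma' C s r ->
  (forall t' f, in_diff I' C t' -> List.In f Sigma' -> ~ viol tg t' f) ->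
  Inv s -> (forall B, B \in s.1 -> s.2 B = tg B) -> r <> None.
Proof.
move=> Hinit; elim=> {s r}.
- move=> Fx tc t' f H1 H2 [Hag Hne] HA Htg Hi Hfx _.
  have Hsub := @agree_fixed _ _ _ Hinit Hi H1 Hag.
  apply: (Htg t' f H1 H2); split.
  + move=> B HB; rewrite -(Hfx B (subsetP Hsub _ HB)); exact: Hag.
  + by rewrite -(Hfx _ HA).
- move=> s s' r Hst _ IH Htg Hi Hfx; apply: IH => //; first exact: step_inv Hst Hi.
  move: Hst => [t' [f [H1 [H2 [[Hag Hne] [HA ->]]]]]] B /=.
  rewrite in_setU1 /upd; case: eqP => [-> _|_ /= HB]; last exact: Hfx.
  have Hsub := @agree_fixed _ _ _ Hinit Hi H1 Hag.
  apply: NNPP => Hn; apply: (Htg t' f H1 H2); split.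
  + move=> B' HB'; rewrite -(Hfx B' (subsetP Hsub _ HB')); exact: Hag.
  + by move=> E; apply: Hn; rewrite E.
- by [].
Qed.

End Pf.

Theorem lemma2 (Attr : finType) (K : Type)
  (Sigma' : seq (fd Attr)) (I' : seq (vtuple Attr K)) (C : vtuple Attr K -> Prop)
  (t : vtuple Attr K) (F : {set Attr}) (tc0 : vtuple Attr K) :
  F != set0 ->
  fa_init I' t F tc0 ->
  (* termination: no infinite sequence of loop iterations, and some result *)
  (Acc (fun s' s => fa_step I' Sigma' C s s') (F, tc0) /\
   exists r, find_assignment t F I' Sigma' C tc0 r) /\
  (* soundness *)
  (forall tc, find_assignment t F I' Sigma' C tc0 (Some tc) ->
     (forall B, B \in F -> tc B = t B) /\
     (forall t' f, in_diff I' C t' -> List.In f Sigma' -> ~ viol tc t' f)) /\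
  (* completeness *)
  ((exists tg : vtuple Attr K, (forall B, B \in F -> tg B = t B) /\
      (forall t' f, in_diff I' C t' -> List.In f Sigma' -> ~ viol tg t' f)) ->
   ~ find_assignment t F I' Sigma' C tc0 None).
Proof.
move=> _ Hinit.
have HInv : @Inv Attr K t F tc0 ((F, tc0) : fa_state Attr K).
  by split; [exact: subxx | split => //=; case: Hinit].
have Hacc : Acc (fun s' s => fa_step I' Sigma' C s s') ((F, tc0) : fa_state Attr K).
  exact: (@acc_all _ _ _ _ _ #|~: F|).
split; [split=> //; exact: exists_run Hacc|split].
- move=> tc H; exact: (@sound Attr K Sigma' I' C t F tc0 _ _ H HInv tc erefl).
- move=> [tg [Htg Hv]] H; apply: (@complete Attr K Sigma' I' C t F tc0 tg _ _ Hinit H Hv HInv) => //.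
  move=> B HB /=; rewrite (Htg B HB); case: Hinit => H1 _; exact: H1.
Qed.
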